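(* Let $\pi>0$, $\bar d>0$, $0<\theta_1<\dots<\theta_K$, $0\le\beta_1<\dots<\beta_M\le1$, and let $A:[0,D]\to[0,\bar d]$ be differentiable with $A'(Q)<0$ on $[0,D]$. Enumerate the $KM$ types $(\beta_m,\theta_k)$ as $\Lambda_1,\dots,\Lambda_{KM}$ and write $L(Q,\beta,\theta)=\theta[\bar d-\beta A(Q)]-\pi(1-\beta)A(Q)$ and $\bar S(Q,\Pi,\Lambda)=L(Q,\Lambda)-\Pi$. Let $\Phi=\{\phi_i=(Q_i,\Pi_i)\}_{i=1}^{KM}$, $Q_i\in[0,D]$, $\Pi_i\in\mathbb{R}$, be a feasible contract, i.e. $\bar S(Q_i,\Pi_i,\Lambda_i)\ge0$ for all $i$ (individual rationality) and $\bar S(Q_i,\Pi_i,\Lambda_i)\ge\bar S(Q_j,\Pi_j,\Lambda_i)$ for all $i\neq j$ (incentive compatibility). Then for all $i,j$: $Q_i<Q_j$ if and only if $\Pi_i<\Pi_j$.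
   Context: Model: an operator offers a contract consisting of one item (data cap $Q_i$, monthly subscription fee $\Pi_i$) intended for each user type $\Lambda_i$. $\pi$ is the overage price, $\bar d$ the mean demand, $A(Q)$ the expected overage consumption under cap $Q$ (decreasing, convex). $L$ is the user's virtual payoff (payoff before the subscription fee), $\bar S$ his expected payoff. *)

(* Defs.v *)
From Stdlib Require Export Reals Lra Lia.
Open Scope R_scope.

Definition has_deriv_within (f : R -> R) (a b x l : R) : Prop :=
  forall eps, 0 < eps -> exists delta, 0 < delta /\
    forall y, a <= y <= b -> y <> x -> Rabs (y - x) < delta ->
      Rabs ((f y - f x) / (y - x) - l) < eps.

Definition Lpay (pi dbar : R) (A : R -> R) (Q beta theta : R) : R :=
  theta * (dbar - beta * A Q) - pi * (1 - beta) * A Q.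

Definition Spay (pi dbar : R) (A : R -> R) (Q Pi beta theta : R) : R :=
  Lpay pi dbar A Q beta theta - Pi.

(* Main.v *)
Require Import Defs.
From Stdlib Require Import Reals.
Open Scope R_scope.

From Stdlib Require Import ClassicalEpsilon.

Lemma interior_deriv (A : R -> R) (D c l : R) :
  0 < c < D -> has_deriv_within A 0 D c l -> derivable_pt_lim A c l.
Proof.
  intros Hc H eps Heps.
  destruct (H eps Heps) as [d [Hd Hy]].
  assert (Hm : 0 < Rmin d (Rmin c (D - c))).
  { apply Rmin_pos; [lra|apply Rmin_pos; lra]. }
  exists (mkposreal _ Hm). simpl. intros h Hh Hlt.
  pose proof (Rmin_l d (Rmin c (D - c))).
  pose proof (Rmin_r d (Rmin c (D - c))).
  pose proof (Rmin_l c (D - c)). pose proof (Rmin_r c (D - c)).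
  pose proof (Rle_abs h). pose proof (Rle_abs (-h)). rewrite Rabs_Ropp in *.
  replace h with (c + h - c) at 2 by ring.
  apply Hy.
  - lra.
  - intro E. apply Hh. lra.
  - replace (c + h - c) with h by ring. lra.
Qed.

Lemma quot_neg (q l : R) : l < 0 -> Rabs (q - l) < - l -> q < 0.
Proof. intros Hl H. pose proof (Rle_abs (q - l)). lra. Qed.

Lemma A_strict_dec (A : R -> R) (D : R)
  (HA_deriv : forall q, 0 <= q <= D -> exists l, has_deriv_within A 0 D q l /\ l < 0) :
  forall x y, 0 <= x -> x < y -> y <= D -> A y < A x.
Proof.
  intros x y Hx Hxy HyD.
  destruct (HA_deriv x ltac:(lra)) as [lx [Hdx Hlx]].
  destruct (Hdx (- lx) ltac:(lra)) as [dx [Hdxp Hx1]].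
  set (x1 := x + Rmin dx (y - x) / 2).
  pose proof (Rmin_l dx (y - x)). pose proof (Rmin_r dx (y - x)).
  assert (Hmx : 0 < Rmin dx (y - x)) by (apply Rmin_pos; lra).
  assert (Ax1 : A x1 < A x).
  { assert (Hq := Hx1 x1 ltac:(unfold x1; lra) ltac:(unfold x1; lra)
       ltac:(unfold x1; rewrite Rabs_right; lra)).
    apply quot_neg in Hq; [|lra].
    destruct (Rlt_or_le (A x1) (A x)) as [?|Hc]; [assumption|].
    exfalso. assert (0 <= (A x1 - A x) / (x1 - x)).
    { unfold Rdiv. apply Rmult_le_pos; [lra|]. left. apply Rinv_0_lt_compat.
      unfold x1; lra. }
    lra. }
  destruct (HA_deriv y ltac:(lra)) as [ly [Hdy Hly]].
  destruct (Hdy (- ly) ltac:(lra)) as [dy [Hdyp Hy1]].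
  set (y1 := y - Rmin dy (y - x1) / 2).
  assert (Hx1y : x1 < y) by (unfold x1; lra).
  pose proof (Rmin_l dy (y - x1)). pose proof (Rmin_r dy (y - x1)).
  assert (Hmy : 0 < Rmin dy (y - x1)) by (apply Rmin_pos; lra).
  assert (Ay1 : A y < A y1).
  { assert (Hq := Hy1 y1 ltac:(unfold y1, x1 in *; lra) ltac:(unfold y1; lra)
       ltac:(unfold y1; rewrite Rabs_left; lra)).
    apply quot_neg in Hq; [|lra].
    destruct (Rlt_or_le (A y) (A y1)) as [?|Hc]; [assumption|].
    exfalso. assert (0 <= (A y1 - A y) / (y1 - y)).
    { replace ((A y1 - A y) / (y1 - y)) with ((A y - A y1) / (y - y1))
        by (field; unfold y1; lra).
      unfold Rdiv. apply Rmult_le_pos; [lra|]. left. apply Rinv_0_lt_compat.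
      unfold y1; lra. }
    lra. }
  assert (Hex : forall c, exists l, 0 < c < D -> derivable_pt_lim A c l /\ l < 0).
  { intro c. destruct (Rlt_or_le 0 c) as [Hz|Hz].
    - destruct (Rlt_or_le c D) as [Hz1|Hz1].
      + destruct (HA_deriv c ltac:(lra)) as [l [Hl1 Hl2]]. exists l. intros Hc.
        split; [apply interior_deriv with D; assumption|assumption].
      + exists 0. intros; lra.
    - exists 0. intros; lra. }
  set (f' := fun c => proj1_sig (constructive_indefinite_description _ (Hex c))).
  assert (Hf' : forall c, 0 < c < D -> derivable_pt_lim A c (f' c) /\ f' c < 0).
  { intros c Hc. unfold f'. destruct (constructive_indefinite_description _ (Hex c)) as [l Hl].
    simpl. auto. }
  assert (Hx1y1 : x1 < y1) by (unfold y1; lra).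
  assert (Hx1p : 0 < x1) by (unfold x1; lra).
  assert (Hy1D : y1 < D) by (unfold y1; lra).
  clearbody x1 y1.
  destruct (MVT_cor2 A f' x1 y1 Hx1y1) as [c [Hc1 Hc2]].
  { intros c Hc. apply Hf'. lra. }
  assert (f' c < 0) by (apply Hf'; lra).
  assert (f' c * (y1 - x1) < 0).
  { apply Rmult_neg_pos; lra. }
  lra.
Qed.

Theorem lemma3
  (pi dbar D : R) (K M : nat) (theta beta : nat -> R) (A : R -> R)
  (e : nat -> nat * nat) (Q Pi : nat -> R)
  (Hpi : 0 < pi) (Hdbar : 0 < dbar)
  (Htheta_pos : forall k, (k < K)%nat -> 0 < theta k)
  (Htheta_inc : forall k1 k2, (k1 < k2)%nat -> (k2 < K)%nat -> theta k1 < theta k2)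
  (Hbeta_range : forall m, (m < M)%nat -> 0 <= beta m <= 1)
  (Hbeta_inc : forall m1 m2, (m1 < m2)%nat -> (m2 < M)%nat -> beta m1 < beta m2)
  (HA_range : forall q, 0 <= q <= D -> 0 <= A q <= dbar)
  (HA_deriv : forall q, 0 <= q <= D -> exists l, has_deriv_within A 0 D q l /\ l < 0)
  (He_range : forall i, (i < K * M)%nat -> (fst (e i) < M)%nat /\ (snd (e i) < K)%nat)
  (He_inj : forall i j, (i < K * M)%nat -> (j < K * M)%nat -> e i = e j -> i = j)
  (He_surj : forall m k, (m < M)%nat -> (k < K)%nat ->
                exists i, (i < K * M)%nat /\ e i = (m, k))
  (HQ : forall i, (i < K * M)%nat -> 0 <= Q i <= D)
  (HIR : forall i, (i < K * M)%nat ->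
           0 <= Spay pi dbar A (Q i) (Pi i) (beta (fst (e i))) (theta (snd (e i))))
  (HIC : forall i j, (i < K * M)%nat -> (j < K * M)%nat -> i <> j ->
           Spay pi dbar A (Q j) (Pi j) (beta (fst (e i))) (theta (snd (e i)))
           <= Spay pi dbar A (Q i) (Pi i) (beta (fst (e i))) (theta (snd (e i)))) :
  forall i j, (i < K * M)%nat -> (j < K * M)%nat ->
    (Q i < Q j <-> Pi i < Pi j).
Proof.
  intros i j Hi Hj.
  destruct (Nat.eq_dec i j) as [<-|Hne]; [split; intro; lra|].
  pose proof (HIC i j Hi Hj Hne) as Cij.
  pose proof (HIC j i Hj Hi (not_eq_sym Hne)) as Cji.
  unfold Spay, Lpay in Cij, Cji.
  destruct (He_range i Hi) as [Hmi Hki]. destruct (He_range j Hj) as [Hmj Hkj].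
  set (bi := beta (fst (e i))) in *. set (ti := theta (snd (e i))) in *.
  set (bj := beta (fst (e j))) in *. set (tj := theta (snd (e j))) in *.
  assert (Hbi := Hbeta_range _ Hmi). assert (Hbj := Hbeta_range _ Hmj).
  assert (Hti := Htheta_pos _ Hki). assert (Htj := Htheta_pos _ Hkj).
  fold bi in Hbi. fold bj in Hbj. fold ti in Hti. fold tj in Htj.
  assert (Hai : 0 < ti * bi + pi * (1 - bi)).
  { destruct (Rle_lt_or_eq_dec 0 bi (proj1 Hbi)) as [Hb|Hb].
    - assert (0 < ti * bi) by (apply Rmult_lt_0_compat; lra).
      assert (0 <= pi * (1 - bi)) by (apply Rmult_le_pos; lra). lra.
    - rewrite <- Hb. lra. }
  assert (Haj : 0 < tj * bj + pi * (1 - bj)).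
  { destruct (Rle_lt_or_eq_dec 0 bj (proj1 Hbj)) as [Hb|Hb].
    - assert (0 < tj * bj) by (apply Rmult_lt_0_compat; lra).
      assert (0 <= pi * (1 - bj)) by (apply Rmult_le_pos; lra). lra.
    - rewrite <- Hb. lra. }
  assert (E1 : Pi i - Pi j <= (ti * bi + pi * (1 - bi)) * (A (Q j) - A (Q i))) by lra.
  assert (E2 : Pi j - Pi i <= (tj * bj + pi * (1 - bj)) * (A (Q i) - A (Q j))) by lra.
  pose proof (HQ i Hi). pose proof (HQ j Hj).
  split; intro Hlt0.
  - assert (A (Q j) < A (Q i)) by (apply (A_strict_dec A D HA_deriv); lra).
    assert (0 < (ti * bi + pi * (1 - bi)) * (A (Q i) - A (Q j)))
      by (apply Rmult_lt_0_compat; lra).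
    lra.
  - destruct (Rlt_or_le (Q i) (Q j)) as [?|Hle]; [assumption|]. exfalso.
    assert (A (Q i) <= A (Q j)).
    { destruct Hle as [Hlt|Heq].
      - left. apply (A_strict_dec A D HA_deriv); lra.
      - rewrite Heq. lra. }
    assert ((tj * bj + pi * (1 - bj)) * (A (Q i) - A (Q j)) <= 0).
    { replace ((tj * bj + pi * (1 - bj)) * (A (Q i) - A (Q j))) with
        (- ((tj * bj + pi * (1 - bj)) * (A (Q j) - A (Q i)))) by ring.
      assert (0 <= (tj * bj + pi * (1 - bj)) * (A (Q j) - A (Q i)))
        by (apply Rmult_le_pos; lra). lra. }
    lra.
Qed.
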